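(* For any $m$, $n\le m$ and $0<\rho<n$, there exists a code over $\mathrm{GF}(q^m)$ of length $n$ and rank covering radius $\rho$ whose cardinality gives $$K_{\mathrm R}(q^m,n,\rho)\le\left\lfloor\frac{1}{1-\log_{q^{mn}}\left(q^{mn}-V_\rho(q^m,n)\right)}\right\rfloor+1.$$
   Context: The rank $\mathrm{rk}(\mathbf x)$ of $\mathbf x\in\mathrm{GF}(q^m)^n$ is the maximum number of its coordinates linearly independent over $\mathrm{GF}(q)$, and $d_{\mathrm R}(\mathbf x,\mathbf y)=\mathrm{rk}(\mathbf x-\mathbf y)$. $K_{\mathrm R}(q^m,n,\rho)$ is the minimum cardinality of a code in $\mathrm{GF}(q^m)^n$ with rank covering radius $\rho$ (covering radius $=\max_{\mathbf x}\min_{\mathbf c\in C}d_{\mathrm R}(\mathbf x,\mathbf c)$). $V_\rho(q^m,n)=\sum_{u=0}^\rho{n\brack u}\alpha(m,u)$ with $\alpha(m,0)=1$, $\alpha(m,u)=\prod_{i=0}^{u-1}(q^m-q^i)$, ${n\brack u}=\alpha(n,u)/\alpha(u,u)$. *)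

(* Defs.v *)
From HB Require Import structures.
From mathcomp Require Import all_boot all_order all_algebra all_field.
From Stdlib Require Reals.
From Stdlib Require ZArith.
Set Implicit Arguments. Unset Strict Implicit. Unset Printing Implicit Defensive.
Import GRing.Theory.

Local Open Scope ring_scope.

(* GF(q^m) is modelled as a field extension L of K = GF(q) (K a finite field);
   q = #|K|, m = \dim {:L} (dimension of L over K). *)

Definition rk (K : finFieldType) (L : fieldExtType K) (n : nat) (x : 'rV[L]_n) : nat :=
  \max_(S : {set 'I_n} | free [seq x ord0 i | i <- enum S]) #|S|.

Definition dR (K : finFieldType) (L : fieldExtType K) (n : nat) (x y : 'rV[L]_n) : nat :=
  rk (x - y).

(* C has rank covering radius exactly rho:
   max_x min_{c in C} dR(x,c) = rho. *)
Definition has_rank_covering_radius (K : finFieldType) (L : fieldExtType K) (n : nat)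
  (C : seq 'rV[L]_n) (rho : nat) : Prop :=
  (forall x : 'rV[L]_n, exists2 c, c \in C & (dR x c <= rho)%N) /\
  (exists x : 'rV[L]_n, forall c, c \in C -> (rho <= dR x c)%N).

Definition alpha (q m u : nat) : nat := \prod_(i < u) (q ^ m - q ^ i)%N.

(* Gaussian binomial [n brack u] = alpha(n,u)/alpha(u,u) (exact division) *)
Definition gbin (q n u : nat) : nat := (alpha q n u %/ alpha q u u)%N.

Definition Vrank (q m n rho : nat) : nat :=
  (\sum_(u < rho.+1) gbin q n u * alpha q m u)%N.

Definition cover_bound (q m n rho : nat) : BinNums.Z :=
  let Nq := expn q (muln m n) in
  BinInt.Z.add (R_Ifp.Int_part (Rdefinitions.Rdiv Rdefinitions.R1 (Rdefinitions.Rminus Rdefinitions.R1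
       (Rdefinitions.Rdiv (Rpower.ln (Raxioms.INR (subn Nq (Vrank q m n rho))))
                          (Rpower.ln (Raxioms.INR Nq))))) ) (BinNums.Zpos BinNums.xH).

(* Main.v *)
Require Import Defs.
From Stdlib Require Import Reals Lra Lia ZArith.
From HB Require Import structures.
From mathcomp Require Import all_boot all_order all_algebra all_field.
From Stdlib Require ZArith.
Set Implicit Arguments. Unset Strict Implicit. Unset Printing Implicit Defensive.
Import GRing.Theory.

Section RealPart.
Local Open Scope R_scope.


Lemma INR_expn (a k : nat) : INR (expn a k) = pow (INR a) k.
Proof.
elim: k => [|k IH]; first by rewrite expn0.
by rewrite expnS -multE mult_INR IH.
Qed.

Lemma bound_ok (N V : nat) : (1 <= V)%N -> (V < N)%N ->
  let bnd := Z.add (R_Ifp.Int_part (Rdiv R1 (Rminus R1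
       (Rdiv (ln (INR (subn N V))) (ln (INR N)))))) (Zpos xH) in
  Z.le Z0 bnd /\ (muln N (expn (subn N V) (Z.to_nat bnd)) < expn N (Z.to_nat bnd))%N.
Proof.
move=> V1 VN bnd.
have hb1 : (1 <= subn N V)%N by rewrite subn_gt0.
have hb : (1 <= INR (subn N V)) by apply: (le_INR 1); apply/leP.
have hab : (INR (subn N V) < INR N).
  apply: lt_INR; apply/ltP; rewrite ltn_subrL; apply/andP; split=> //.
  by apply: leq_trans VN.
have ha : (1 < INR N) by lra.
set a := INR N in ha hab *; set b := INR (subn N V) in hb hab *.
have lna : (0 < ln a) by rewrite -ln_1; apply: ln_increasing; lra.
have lnb : (0 <= ln b).
  case: (Rle_lt_or_eq_dec 1 b hb) => h; last by rewrite -h ln_1; lra.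
  by rewrite -ln_1; left; apply: ln_increasing; lra.
have lnab : (ln b < ln a) by apply: ln_increasing; lra.
set t := Rdiv R1 (Rminus R1 (Rdiv (ln b) (ln a))).
have tE : t = (ln a / (ln a - ln b)).
  rewrite /t; field; lra.
have t1 : (1 <= t).
  have -> : t = 1 + ln b / (ln a - ln b) by rewrite tE; field; lra.
  have : 0 <= ln b / (ln a - ln b).
    by unfold Rdiv; apply: Rmult_le_pos; [lra | left; apply: Rinv_0_lt_compat; lra].
  lra.
have [hz1 hz2] := base_Int_part t.
set z := R_Ifp.Int_part t in hz1 hz2.
have bnd0 : Z.le Z0 bnd.
  have : (0 < IZR z + 1) by lra.
  rewrite /bnd -/z => h; have : Z.lt Z0 (Z.add z (Zpos xH)).
    by apply: lt_IZR; rewrite plus_IZR.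
  lia.
split=> //.
set k := Z.to_nat bnd.
have kE : INR k = (IZR z + 1).
  by rewrite /k INR_IZR_INZ Z2Nat.id // /bnd plus_IZR.
have kt : (t < INR k) by rewrite kE; lra.
have key : (ln a + INR k * ln b < INR k * ln a).
  rewrite tE in kt.
  have : (ln a < INR k * (ln a - ln b)).
    have d0 : 0 < ln a - ln b by lra.
    have := Rmult_lt_compat_r _ _ _ d0 kt.
    have -> : ln a / (ln a - ln b) * (ln a - ln b) = ln a by field; lra.
    by [].
  lra.
apply/ltP; apply: INR_lt.
rewrite -multE mult_INR !INR_expn -/a -/b.
have pa : (0 < a ^ k) by apply: pow_lt; lra.
have pb : (0 < b ^ k) by apply: pow_lt; lra.
apply: ln_lt_inv => //; first by apply: Rmult_lt_0_compat; lra.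
by rewrite ln_mult ?ln_pow //; lra.
Qed.

End RealPart.

From mathcomp Require Import zify ring.

Fixpoint Gb (q n u : nat) : nat :=
  match n, u with
  | 0, 0 => 1
  | 0, _.+1 => 0
  | _.+1, 0 => 1
  | n'.+1, u'.+1 => q ^ u'.+1 * Gb q n' u'.+1 + Gb q n' u'
  end.

Lemma alphaS q m u : alpha q m u.+1 = alpha q m u * (q ^ m - q ^ u).
Proof. by rewrite /alpha big_ord_recr. Qed.

Lemma alpha0 q m : alpha q m 0 = 1.
Proof. by rewrite /alpha big_ord0. Qed.

Lemma alphaSl q N u : 0 < q ->
  alpha q N.+1 u.+1 = (q ^ N.+1 - 1) * q ^ u * alpha q N u.
Proof.
move=> q0; rewrite /alpha big_ord_recl expn0 -mulnA; congr (_ * _).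
elim: u => [|u IH]; first by rewrite !big_ord0.
rewrite !big_ord_recr /= IH.
have -> : q ^ N.+1 - q ^ bump 0 u = q * (q^N - q^u) by rewrite /bump add1n !expnS mulnBr.
rewrite expnS; ring.
Qed.

Lemma alpha_big q n u : n < u -> alpha q n u = 0.
Proof.
move=> nu; rewrite /alpha (bigD1 (Ordinal nu)) //= subnn. by rewrite mul0n.
Qed.

Lemma Gb_n0 q n : Gb q n 0 = 1.
Proof. by case: n. Qed.

Lemma Gb_alpha q n u : 1 < q -> Gb q n u * alpha q u u = alpha q n u.
Proof.
move=> q1; have q0 : 0 < q by lia.
elim: n u => [|n IH] [|u]; rewrite /= ?alpha0 ?muln1 //.
  by rewrite mul0n (@alpha_big q 0 u.+1).
rewrite mulnDl -mulnA IH alphaSl //.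
have -> : Gb q n u * ((q ^ u.+1 - 1) * q ^ u * alpha q u u) =
   (q ^ u.+1 - 1) * q ^ u * alpha q n u by rewrite -IH; ring.
rewrite alphaS alphaSl //.
have [un|nu] := leqP u n; last by rewrite (alpha_big q nu) !muln0.
have qa : 1 <= q ^ u by rewrite expn_gt0 q0.
have ab : q ^ u <= q ^ n by rewrite leq_exp2l.
rewrite !expnS.
set a := q ^ u in qa ab *; set b := q ^ n in ab *; set c := alpha q n u.
have e : q * (b - a) + (q * a - 1) = q * b - 1.
  rewrite mulnBr; have : q * a <= q * b by rewrite leq_mul2l ab orbT.
  have : 0 < q * a by rewrite muln_gt0 q0 qa.
  lia.
rewrite -e; ring.
Qed.

Lemma alpha_gt0 q u : 1 < q -> 0 < alpha q u u.
Proof.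
move=> q1; rewrite /alpha prodn_gt0 // => i; rewrite subn_gt0 ltn_exp2l //.
Qed.

Lemma gbinE q n u : 1 < q -> gbin q n u = Gb q n u.
Proof. by move=> q1; rewrite /gbin -(Gb_alpha n u q1) mulnK // alpha_gt0. Qed.

Section Count.
Variables (K : finFieldType) (L : fieldExtType K).
Local Notation FL := (finvect_type L).
Local Notation q := #|K|.
Local Notation m := (\dim {: FL}).

Lemma dim_cons (a : FL) (s : seq FL) :
  \dim <<a :: s>>%VS = (\dim <<s>>%VS + (a \notin <<s>>%VS))%N.
Proof.
rewrite span_cons; case: (boolP (a \in <<s>>%VS)) => H /=.
  by rewrite addn0 (addv_idPr H).
have a0 : a != 0%R by apply: contraNneq H => ->; rewrite mem0v.
have := dimv_sum_cap <[a]>%VS <<s>>%VS.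
rewrite dim_vline a0 /=.
have -> : \dim (<[a]> :&: <<s>>)%VS = 0%N.
  have sub : (<[a]> :&: <<s>> <= <[a]>)%VS by apply: capvSl.
  have := dimv_leqif_sup sub; rewrite dim_vline a0 => -[le1 eqiff].
  have : (<[a]> <= <[a]> :&: <<s>>)%VS = false.
    by rewrite -memvE memv_cap memv_line (negbTE H).
  rewrite -eqiff; move: le1; case: (\dim _) => [//|[|k]] //.
by rewrite addn0 addnC => ->.
Qed.

Lemma card_FL : #|FL| = (q ^ m)%N.
Proof.
transitivity #|(fullv : {vspace FL})|; first by apply: eq_card => v; rewrite memvf.
by rewrite card_vspace.
Qed.

Lemma sum_bool (T : finType) (P : pred T) : (\sum_(x : T) (P x : nat))%N = #|P|.
Proof.
by rewrite -sum1_card [in RHS]big_mkcond; apply: eq_bigr => x _; rewrite unfold_in; case: (P x).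
Qed.

Lemma inner_sum (t : seq FL) (u : nat) :
  (\sum_(a : FL) (\dim <<a :: t>>%VS == u))%N =
  ((\dim <<t>>%VS == u) * q ^ \dim <<t>>%VS
   + ((\dim <<t>>%VS).+1 == u) * (q ^ m - q ^ \dim <<t>>%VS))%N.
Proof.
rewrite (bigID (fun a => a \in <<t>>%VS)) /=.
congr (_ + _).
  rewrite (eq_bigr (fun _ => (\dim <<t>>%VS == u) : nat)); last first.
    by move=> a Ha; rewrite dim_cons Ha addn0.
  rewrite sum_nat_const mulnC; congr (_ * _).
  by rewrite -card_vspace.
rewrite (eq_bigr (fun _ => ((\dim <<t>>%VS).+1 == u) : nat)); last first.
  by move=> a Ha; rewrite dim_cons Ha addn1.
rewrite sum_nat_const mulnC; congr (_ * _).
rewrite -card_FL -card_vspace -(cardC (mem <<t>>%VS)) addKn.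
by apply: eq_card => x; rewrite !inE.
Qed.

Definition cnt n u := (\sum_(t : n.-tuple FL) (\dim <<(t : seq FL)>>%VS == u))%N.

Lemma sum_tupleS n (F : n.+1.-tuple FL -> nat) :
  (\sum_(t : n.+1.-tuple FL) F t = \sum_(t : n.-tuple FL) \sum_(a : FL) F [tuple of a :: t])%N.
Proof.
rewrite exchange_big pair_big /=.
rewrite (reindex (fun p : FL * n.-tuple FL => [tuple of p.1 :: p.2])) //=.
exists (fun t : n.+1.-tuple FL => (thead t, [tuple of behead t])).
  by move=> [a t] _ /=; rewrite theadE; congr (_, _); apply: val_inj.
by move=> t _; rewrite [RHS]tuple_eta.
Qed.

Lemma eq_mul_subst (x y : nat) (f : nat -> nat) :
  ((x == y) * f x = (x == y) * f y)%N.
Proof. by case: eqP => [->|]. Qed.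

Lemma cntS n u : cnt n.+1 u =
  (cnt n u * q ^ u + (if u is u'.+1 then cnt n u' * (q ^ m - q ^ u') else 0))%N.
Proof.
rewrite /cnt sum_tupleS.
rewrite (eq_bigr (fun t : n.-tuple FL => (\dim <<(t : seq FL)>>%VS == u) * q ^ u +
   ((\dim <<(t : seq FL)>>%VS).+1 == u) * (q ^ m - q ^ \dim <<(t : seq FL)>>%VS)))%N;
  last first.
  by move=> t _; rewrite (inner_sum t u) (eq_mul_subst _ _ (fun x => q ^ x)).
rewrite big_split /= -big_distrl /=; congr (_ + _).
case: u => [|u]; first by rewrite big1.
rewrite big_distrl /=; apply: eq_bigr => t _; rewrite eqSS.
by rewrite (eq_mul_subst _ _ (fun x => q ^ m - q ^ x)).
Qed.

Lemma cnt0 u : cnt 0 u = (u == 0%N).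
Proof.
rewrite /cnt (eq_bigr (fun _ => (u == 0%N) : nat)).
  by rewrite sum_nat_const card_tuple expn0 mul1n.
by move=> t _; rewrite tuple0 /= span_nil dimv0 eq_sym.
Qed.

Lemma cntE n u : cnt n u = (Gb q n u * alpha q m u)%N.
Proof.
elim: n u => [|n IH] u.
  by rewrite cnt0; case: u => [|u] //=; rewrite alpha0.
rewrite cntS; case: u => [|u].
  by rewrite IH /= !Gb_n0 alpha0 expn0 !muln1 addn0.
rewrite !IH /= alphaS; ring.
Qed.
End Count.

Section Rank.
Variables (K : finFieldType) (L : fieldExtType K).
Local Notation FL := (finvect_type L).
Local Notation q := #|K|.
Local Notation m := (\dim {: FL}).

Lemma mask_free (X : seq FL) (b : bitseq) : free X -> free (mask b X).
Proof.
elim: X b => [|x X IH] [|c b] //=; rewrite ?nil_free //.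
rewrite free_cons => /andP[xX fX]; case: c; last exact: IH.
rewrite free_cons IH // andbT; apply: contra xX => h.
have : (<<mask b X>> <= <<X>>)%VS by apply: sub_span => y /mem_mask.
by move/subvP; apply.
Qed.

Lemma enum_setD1 n (S : {set 'I_n}) (j : 'I_n) :
  enum (S :\ j) = filter (predC1 j) (enum S).
Proof.
rewrite /enum_mem -filter_predI; apply: eq_filter => i; by rewrite /= !inE andbC.
Qed.

Lemma one_coord n (j : 'I_n) (y z : 'rV[FL]_n) :
  (forall j', j' != j -> y ord0 j' = z ord0 j') -> (rk y <= (rk z).+1)%N.
Proof.
move=> H; rewrite /rk; apply/bigmax_leqP => S freeS.
have fz : free [seq z ord0 i | i <- enum (S :\ j)].
  have -> : [seq z ord0 i | i <- enum (S :\ j)] = [seq y ord0 i | i <- enum (S :\ j)].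
    apply/eq_in_map => i; rewrite mem_enum !inE => /andP[ij _]; by rewrite H.
  by rewrite enum_setD1 filter_mask map_mask mask_free.
rewrite (cardsD1 j) -addn1 addnC leq_add ?leq_b1 //.
by apply: leq_bigmax_cond.
Qed.

Definition dsp n (y : 'rV[FL]_n) := \dim <<[seq y ord0 i | i <- enum 'I_n]>>%VS.

Lemma rk_le_dsp n (y : 'rV[FL]_n) : (rk y <= dsp y)%N.
Proof.
rewrite /rk; apply/bigmax_leqP => S freeS.
rewrite cardE -(size_map (y ord0)) -(eqnP freeS) /dsp; apply: dimvS; apply: sub_span.
by move=> a /mapP[i _ ->]; apply: map_f; rewrite mem_enum.
Qed.

Definition bvec n : 'rV[FL]_n := \row_(i < n) nth 0%R (vbasis (fullv : {vspace FL})) i.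

Lemma rk_basis n : (n <= m)%N -> (n <= rk (bvec n))%N.
Proof.
move=> nm; rewrite /rk.
rewrite -[X in (X <= _)%N](card_ord n) -cardsT; apply: leq_bigmax_cond.
rewrite enum_setT -enumT.
have -> : [seq bvec n ord0 i | i <- enum 'I_n] = take n (vbasis (fullv : {vspace FL})).
  rewrite -(map_nth_iota0 0%R) ?size_tuple // -val_enum_ord -map_comp.
  by apply: eq_map => i /=; rewrite mxE.
have := basis_free (vbasisP (fullv : {vspace FL})).
by rewrite -[X in free X -> _](cat_take_drop n) => /catl_free.
Qed.

End Rank.

Section Ball.
Variables (K : finFieldType) (L : fieldExtType K).
Local Notation FL := (finvect_type L).
Local Notation q := #|K|.
Local Notation m := (\dim {: FL}).

Lemma sum_eq_ord (d r : nat) : (\sum_(u < r.+1) (d == u) = (d <= r))%N.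
Proof.
elim: r => [|r IH]; first by rewrite big_ord1 leqn0.
rewrite big_ord_recr /= IH [in RHS]leq_eqVlt ltnS.
by case: eqP => [->|_]; rewrite ?ltnn ?addn0.
Qed.

Definition ballsz n r := (\sum_(y : 'rV[FL]_n) (rk y <= r))%N.

Lemma Vrank_le n r : (Vrank q m n r <= ballsz n r)%N.
Proof.
have q1 : (1 < q)%N by apply: card_finNzRing_gt1.
rewrite /Vrank (eq_bigr (fun u : 'I_r.+1 => cnt L n u)); last first.
  by move=> u _; rewrite gbinE // cntE.
rewrite /cnt exchange_big /=.
rewrite (eq_bigr (fun t : n.-tuple FL => (\dim <<(t : seq FL)>>%VS <= r) : nat)); last first.
  by move=> t _; rewrite sum_eq_ord.
rewrite (reindex (fun y : 'rV[FL]_n => [tuple y ord0 i | i < n])) /=; last first.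
  exists (fun t : n.-tuple FL => ((\row_(i < n) tnth t i)%R : 'rV[FL]_n)).
    by move=> y _; apply/rowP => i; rewrite mxE tnth_mktuple ord1.
  by move=> t _; apply: eq_from_tnth => i; rewrite tnth_mktuple mxE.
apply: leq_sum => y _.
have := rk_le_dsp y; rewrite /dsp.
case: (leqP (\dim _) r) => // h1 h2; by rewrite (leq_trans h2 h1).
Qed.

Lemma ballsz_trans n r (x : 'rV[FL]_n) :
  (\sum_(y : 'rV[FL]_n) (rk (x - y)%R <= r))%N = ballsz n r.
Proof.
rewrite /ballsz (reindex (fun y : 'rV[FL]_n => (x - y)%R)) /=; last first.
  by exists (fun y : 'rV[FL]_n => (x - y)%R) => y _; rewrite opprB addrC subrK.
by apply: eq_bigr => y _; rewrite opprB addrC subrK.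
Qed.

Lemma card_rV n : #|{: 'rV[FL]_n}| = (q ^ (m * n))%N.
Proof. by rewrite card_mx mul1n card_FL -expnM. Qed.

Lemma ballsz_lt n r : (n <= m)%N -> (r < n)%N -> (ballsz n r < q ^ (m * n))%N.
Proof.
move=> nm rn; rewrite -card_rV /ballsz sum_bool.
rewrite -(cardC [pred y : 'rV[FL]_n | rk y <= r]) -addn1 leq_add2l.
apply/card_gt0P; exists (bvec L n); rewrite !inE /= -ltnNge.
exact: leq_trans rn (rk_basis nm).
Qed.

End Ball.

Section Avg.
Variables (K : finFieldType) (L : fieldExtType K).
Local Notation FL := (finvect_type L).

Lemma cover_exists n r k :
  let N := #|{: 'rV[FL]_n}| in
  (N * (N - ballsz L n r) ^ k < N ^ k)%N ->
  exists T : {ffun 'I_k -> 'rV[FL]_n}, forall x, exists i, (rk (x - T i)%R <= r)%N.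
Proof.
move=> N hN.
have [T /forallP HT| none] :=
  pickP (fun T : {ffun 'I_k -> 'rV[FL]_n} => [forall x, [exists i, rk (x - T i)%R <= r]]).
  by exists T => x; have /existsP[i Hi] := HT x; exists i.
exfalso; move: hN; apply/negP; rewrite -leqNgt.
have cardC' (x : 'rV[FL]_n) : #|[pred y : 'rV[FL]_n | ~~ (rk (x - y)%R <= r)]| = (N - ballsz L n r)%N.
  rewrite /N -(ballsz_trans r x) sum_bool -(cardC [pred y : 'rV[FL]_n | rk (x - y)%R <= r]).
  by rewrite addKn; apply: eq_card => y; rewrite !inE.
have e1 : (N ^ k = \sum_(T : {ffun 'I_k -> 'rV[FL]_n}) 1)%N.
  by rewrite sum1_card card_ffun card_ord.
rewrite e1.
apply: (@leq_trans (\sum_(T : {ffun 'I_k -> 'rV[FL]_n}) \sum_(x : 'rV[FL]_n)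
          (~~ [exists i, rk (x - T i)%R <= r] : nat))%N).
  apply: leq_sum => T _.
  have := none T; rewrite /= => /negbT /forallPn [x Hx].
  by rewrite (bigD1 x) //= Hx.
rewrite exchange_big /=.
rewrite (eq_bigr (fun _ => (N - ballsz L n r) ^ k)%N); first by rewrite sum_nat_const.
move=> x _.
rewrite -(cardC' x).
have := @card_ffun_on 'I_k _ [pred y : 'rV[FL]_n | ~~ (rk (x - y)%R <= r)].
rewrite card_ord => <-; rewrite -sum_bool.
apply: eq_bigr => T _; congr (nat_of_bool _).
rewrite negb_exists; apply/forallP/ffun_onP => H i; move: (H i); by rewrite !inE.
Qed.

End Avg.

Section Path.
Variables (K : finFieldType) (L : fieldExtType K).
Local Notation FL := (finvect_type L).
Local Notation m := (\dim {: FL}).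

Lemma exact_radius n r k (C0 : {ffun 'I_k -> 'rV[FL]_n}) :
  (n <= m)%N -> (r < n)%N ->
  (forall x, exists i, (rk (x - C0 i)%R <= r)%N) ->
  exists C : seq 'rV[FL]_n,
    [/\ uniq C, (size C <= k)%N & has_rank_covering_radius C r].
Proof.
move=> nm rn cov.
pose Tt (t : nat) (i : 'I_k) : 'rV[FL]_n :=
  (\row_(j < n) (if (i * n + j < t)%N then C0 i ord0 j else 0))%R.
pose Pb t := [forall x : 'rV[FL]_n, [exists i, rk (x - Tt t i)%R <= r]].
have PbE : Pb (k * n)%N.
  apply/forallP => x; have [i Hi] := cov x; apply/existsP; exists i.
  suff -> : Tt (k * n)%N i = C0 i by [].
  apply/rowP => j; rewrite mxE ord1.
  have -> : (i * n + j < k * n)%N by have := ltn_ord i; have := ltn_ord j; nia.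
  by [].
have [t Pt tmin] := ex_minnP (ex_intro Pb _ PbE).
case: t Pt tmin => [|t] Pt tmin.
  exfalso; have /existsP[i Hi] := forallP Pt (bvec L n).
  have : Tt 0%N i = 0%R by apply/rowP => j; rewrite !mxE.
  move=> e; rewrite e subr0 in Hi.
  by have := leq_trans (rk_basis nm) Hi; rewrite leqNgt rn.
have nPt : ~~ Pb t by apply/negP => /tmin; rewrite ltnn.
have [x Hx] : exists x : 'rV[FL]_n, forall i, (r < rk (x - Tt t i)%R)%N.
  move: nPt => /forallPn [x /existsPn Hx]; exists x => i.
  by rewrite ltnNge; apply: Hx.
have far : forall i, (r <= rk (x - Tt t.+1 i)%R)%N.
  move=> i; rewrite -ltnS; apply: (leq_trans (Hx i)).
  pose j : 'I_n := if [pick j0 : 'I_n | (i * n + j0 == t)%N] is Some j0 then j0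
                   else Ordinal rn.
  have hj : forall j', j' != j -> (i * n + j' != t)%N.
    move=> j'; rewrite /j; case: pickP => [j0 /eqP h0|h].
      apply: contra => /eqP h1; apply/eqP; apply: val_inj => /=; lia.
    by move=> _; have := h j'; rewrite /= => ->.
  apply: (one_coord (j := j)) => j' /hj hj'.
  have e : (i * n + j' < t.+1)%N = (i * n + j' < t)%N by rewrite ltnS leq_eqVlt (negbTE hj').
  by rewrite !mxE e.
pose C := undup [seq Tt t.+1 i | i <- enum 'I_k].
exists C; split.
- exact: undup_uniq.
- by rewrite (leq_trans (size_undup _)) // size_map size_enum_ord.
split.
  move=> y; have /existsP[i Hi] := forallP Pt y.
  exists (Tt t.+1 i) => //; rewrite mem_undup; apply: map_f; by rewrite mem_enum.
exists x => c; rewrite mem_undup => /mapP[i _ ->]; exact: far.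
Qed.

End Path.


Lemma leq_pow_l (a b k : nat) : (a <= b)%N -> (a ^ k <= b ^ k)%N.
Proof. by move=> ab; elim: k => // k IH; rewrite !expnS leq_mul. Qed.

Lemma mainFL (K : finFieldType) (L : fieldExtType K) (n rho : nat) :
  let FL := finvect_type L in
  (n <= \dim {: FL})%N -> (0 < rho)%N -> (rho < n)%N ->
  exists C : seq 'rV[FL]_n,
    [/\ uniq C, has_rank_covering_radius C rho &
        BinInt.Z.le (BinInt.Z.of_nat (size C)) (cover_bound #|K| (\dim {: FL}) n rho)].
Proof.
move=> FL nm r0 rn.
have q1 : (1 < #|K|)%N by apply: card_finNzRing_gt1.
set V := Vrank #|K| (\dim {: FL}) n rho.
have V1 : (1 <= V)%N.
  by rewrite /V /Vrank big_ord_recl /= gbinE // Gb_n0 alpha0 leq_addr.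
have VB : (V <= ballsz L n rho)%N by apply: Vrank_le.
have BN : (ballsz L n rho < #|K| ^ (\dim {: FL} * n))%N by apply: ballsz_lt.
have VN : (V < #|K| ^ (\dim {: FL} * n))%N by apply: leq_ltn_trans BN.
have [b0 hk] := bound_ok V1 VN.
set k := Z.to_nat _ in hk.
have hk' : (#|{: 'rV[FL]_n}| * (#|{: 'rV[FL]_n}| - ballsz L n rho) ^ k
            < #|{: 'rV[FL]_n}| ^ k)%N.
  rewrite card_rV; apply: leq_ltn_trans hk; rewrite leq_mul2l; apply/orP; right.
  by apply: leq_pow_l; apply: leq_sub2l.
have [C0 cov] := cover_exists hk'.
have [C [u sz cr]] := exact_radius nm rn cov.
exists C; split=> //.
apply: (Z.le_trans _ (Z.of_nat k)).
  by apply/Nat2Z.inj_le/leP.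
rewrite /k Z2Nat.id //; exact: Z.le_refl.
Qed.


Theorem proposition11 (K : finFieldType) (L : fieldExtType K) (n rho : nat) :
  (n <= \dim {: L})%N -> (0 < rho)%N -> (rho < n)%N ->
  exists C : seq 'rV[L]_n,
    [/\ uniq C, has_rank_covering_radius C rho &
        BinInt.Z.le (BinInt.Z.of_nat (size C)) (cover_bound #|K| (\dim {: L}) n rho)].
Proof.
exact (@mainFL K L n rho).
Qed.
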